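(* Up to isomorphism, there are exactly 25 Frobenius objects in $\mathbf{Rel}$ whose underlying set has three elements. Writing the set as $X=\{a,b,c\}$, they are the following (pairwise non-isomorphic) structures; in all of them $\tilde\mu$ is symmetric, $\tilde\mu(x,y)=\tilde\mu(y,x)$. Cases 1–20 have unit $\eta=\{a\}$, so $\tilde\mu(a,x)=\tilde\mu(x,a)=\{x\}$ for all $x$, and the remaining values $(\tilde\mu(b,b),\ \tilde\mu(b,c)=\tilde\mu(c,b),\ \tilde\mu(c,c))$ and counit are: 1: $\varepsilon=\{a\}$; $(\{a\},\{c\},\{a,b\})$. 2: $\varepsilon=\{a\}$; $(\{a\},\{c\},\{a,b,c\})$. 3: $\varepsilon=\{a\}$; $(\{a,b\},\{c\},\{a,b\})$. 4: $\varepsilon=\{a\}$; $(\{a,b\},\{c\},\{a,b,c\})$. 5: $\varepsilon=\{a\}$; $(\{a,c\},\{b,c\},\{a,b\})$. 6: $\varepsilon=\{a\}$; $(\{a,c\},\{b,c\},\{a,b,c\})$. 7: $\varepsilon=\{a\}$; $(\{a,b,c\},\{b,c\},\{a,b,c\})$. 8: $\varepsilon=\{a\}$; $(\{b\},\{a,b,c\},\{b,c\})$. 9: $\varepsilon=\{a\}$; $(\{b\},\{a,b,c\},\{c\})$. 10: $\varepsilon=\{a\}$; $(\{c\},\{a\},\{b\})$. 11: $\varepsilon=\{a\}$; $(\{c\},\{a,b\},\{b,c\})$. 12: $\varepsilon=\{a\}$; $(\{b,c\},\{a,b,c\},\{b,c\})$. 13: $\varepsilon=\{b\}$; $(\emptyset,\emptyset,\{b\})$.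 14: $\varepsilon=\{b\}$; $(\emptyset,\emptyset,\{b,c\})$. 15: $\varepsilon=\{b\}$; $(\{a\},\{c\},\{a,b\})$. 16: $\varepsilon=\{b\}$; $(\{a\},\{c\},\{a,b,c\})$. 17: $\varepsilon=\{b\}$; $(\{c\},\{a\},\{b\})$. 18: $\varepsilon=\{b\}$; $(\{c\},\{a,c\},\{a,b,c\})$. 19: $\varepsilon=\{b\}$; $(\{a,c\},\{a,c\},\{a,b\})$. 20: $\varepsilon=\{b\}$; $(\{a,c\},\{a,c\},\{a,b,c\})$. Cases 21–24 have unit $\eta=\{a,b\}$ and $\tilde\mu(a,a)=\{a\}$, $\tilde\mu(a,b)=\tilde\mu(b,a)=\tilde\mu(a,c)=\tilde\mu(c,a)=\emptyset$, $\tilde\mu(b,b)=\{b\}$, $\tilde\mu(b,c)=\tilde\mu(c,b)=\{c\}$, with: 21: $\varepsilon=\{a,b\}$, $\tilde\mu(c,c)=\{b\}$. 22: $\varepsilon=\{a,b\}$, $\tilde\mu(c,c)=\{b,c\}$. 23: $\varepsilon=\{a,c\}$, $\tilde\mu(c,c)=\{b\}$. 24: $\varepsilon=\{a,c\}$, $\tilde\mu(c,c)=\emptyset$. Case 25: $\eta=\varepsilon=\{a,b,c\}$, $\tilde\mu(x,x)=\{x\}$ for each $x$, and $\tilde\mu(x,y)=\emptyset$ for $x\ne y$.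
   Context: $\mathbf{Rel}$ is the monoidal category whose objects are sets, morphisms $X\to Y$ are relations $R\subseteq X\times Y$, composition is $S\circ R=\{(x,z):\exists y,(x,y)\in R,(y,z)\in S\}$, identities are diagonals, the monoidal product is the Cartesian product and the unit is $\{\bullet\}$. A relation $R\subseteq X\times Y$ is identified with $\tilde R:X\to\mathcal{P}(Y)$, $\tilde R(x)=\{y:(x,y)\in R\}$. A Frobenius object in $\mathbf{Rel}$ is a set $X$ with unit $\eta\subseteq X$ (relation $\{\bullet\}\to X$), counit $\varepsilon\subseteq X$ (relation $X\to\{\bullet\}$) and multiplication $\mu\subseteq X\times X\times X$ (relation $X\times X\to X$, described by $\tilde\mu:X\times X\to\mathcal{P}(X)$) satisfying unitality $\mu\circ(\mathbf{1}\times\eta)=\mu\circ(\eta\times\mathbf{1})=\mathbf{1}$, associativity $\mu\circ(\mathbf{1}\times\mu)=\mu\circ(\mu\times\mathbf{1})$, and nondegeneracy: there exists a relation $\beta:\{\bullet\}\to X\times X$ with $(\varepsilon\times\mathbf{1})\circ(\mu\times\mathbf{1})\circ(\mathbf{1}\times\beta)=(\mathbf{1}\times\varepsilon)\circ(\mathbf{1}\times\mu)\circ(\beta\times\mathbf{1})=\mathbf{1}$. An isomorphism between Frobenius objects $(X,\eta,\varepsilon,\tilde\mu)$ and $(X',\eta',\varepsilon',\tilde\mu')$ is a bijection $f:X\to X'$ with $f(\eta)=\eta'$, $f(\varepsilon)=\varepsilon'$ and $\tilde\mu'(f(x),f(y))=f(\tilde\mu(x,y))$ for all $x,y$. *)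

(* Defs.v *)
From mathcomp Require Import all_boot.
Set Implicit Arguments. Unset Strict Implicit. Unset Printing Implicit Defensive.

Definition hrel (X Y : Type) := X -> Y -> Prop.

Definition rcomp X Y Z (S : hrel Y Z) (R : hrel X Y) : hrel X Z :=
  fun x z => exists y, R x y /\ S y z.
Definition rid (X : Type) : hrel X X := fun x y => x = y.
Arguments rid : clear implicits.
Definition rtens X X' Y Y' (R : hrel X Y) (S : hrel X' Y') : hrel (X * X') (Y * Y') :=
  fun p q => R p.1 q.1 /\ S p.2 q.2.
Definition rassoc X Y Z : hrel ((X * Y) * Z) (X * (Y * Z)) :=
  fun p q => q = (p.1.1, (p.1.2, p.2)).
Definition rassoc_inv X Y Z : hrel (X * (Y * Z)) ((X * Y) * Z) :=
  fun p q => q = ((p.1, p.2.1), p.2.2).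
Definition rlunit X : hrel (unit * X) X := fun p x => x = p.2.
Definition rlunit_inv X : hrel X (unit * X) := fun x p => p = (tt, x).
Definition rrunit X : hrel (X * unit) X := fun p x => x = p.1.
Definition rrunit_inv X : hrel X (X * unit) := fun x p => p = (x, tt).
Definition req X Y (R S : hrel X Y) : Prop := forall x y, R x y <-> S x y.

Record frob (T : finType) := Frob {
  f_eta : {set T};              (* unit  eta : {•} -> T *)
  f_eps : {set T};              (* counit eps : T -> {•} *)
  f_mu  : T -> T -> {set T}     (* mu~ : T x T -> P(T) *)
}.

Section FrobRel.
Variables (T : finType) (F : frob T).
Definition eta_rel : hrel unit T := fun _ x => x \in f_eta F.
Definition eps_rel : hrel T unit := fun x _ => x \in f_eps F.
Definition mu_rel : hrel (T * T) T := fun p z => z \in f_mu F p.1 p.2.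

Definition unital : Prop :=
  req (rcomp mu_rel (rcomp (rtens (rid T) eta_rel) (@rrunit_inv T))) (rid T) /\
  req (rcomp mu_rel (rcomp (rtens eta_rel (rid T)) (@rlunit_inv T))) (rid T).

Definition associative : Prop :=
  req (rcomp mu_rel (rcomp (rtens (rid T) mu_rel) (@rassoc T T T)))
      (rcomp mu_rel (rtens mu_rel (rid T))).

Definition nondegenerate : Prop :=
  exists beta : hrel unit (T * T),
    req (rcomp (@rlunit T)
          (rcomp (rtens eps_rel (rid T))
          (rcomp (rtens mu_rel (rid T))
          (rcomp (@rassoc_inv T T T)
          (rcomp (rtens (rid T) beta) (@rrunit_inv T)))))) (rid T) /\
    req (rcomp (@rrunit T)
          (rcomp (rtens (rid T) eps_rel)
          (rcomp (rtens (rid T) mu_rel)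
          (rcomp (@rassoc T T T)
          (rcomp (rtens beta (rid T)) (@rlunit_inv T)))))) (rid T).

Definition is_frobenius : Prop := [/\ unital, associative & nondegenerate].
End FrobRel.

Definition frob_iso (T T' : finType) (F : frob T) (F' : frob T') : Prop :=
  exists f : T -> T', [/\ bijective f,
    f @: f_eta F = f_eta F', f @: f_eps F = f_eps F' &
    forall x y, f_mu F' (f x) (f y) = f @: f_mu F x y].

Definition ea : 'I_3 := @Ordinal 3 0 isT.
Definition eb : 'I_3 := @Ordinal 3 1 isT.
Definition ec : 'I_3 := @Ordinal 3 2 isT.

Definition mu_u (bb bc cc : {set 'I_3}) (x y : 'I_3) : {set 'I_3} :=
  if x == ea then [set y] else if y == ea then [set x]
  else if (x == eb) && (y == eb) then bb
  else if (x == ec) && (y == ec) then cc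
  else bc.
Definition case_u (e bb bc cc : {set 'I_3}) : frob 'I_3 :=
  Frob [set ea] e (mu_u bb bc cc).

Definition mu_v (cc : {set 'I_3}) (x y : 'I_3) : {set 'I_3} :=
  if (x == ea) && (y == ea) then [set ea]
  else if (x == ea) || (y == ea) then set0
  else if (x == eb) && (y == eb) then [set eb]
  else if (x == ec) && (y == ec) then cc
  else [set ec].
Definition case_v (e cc : {set 'I_3}) : frob 'I_3 :=
  Frob [set ea; eb] e (mu_v cc).

Definition case_w : frob 'I_3 :=
  Frob setT setT (fun x y => if x == y then [set x] else set0).

Definition fcase (n : nat) : frob 'I_3 :=
  match n with
  | 1 => case_u [set ea] [set ea] [set ec] [set ea; eb]
  | 2 => case_u [set ea] [set ea] [set ec] [set ea; eb; ec]
  | 3 => case_u [set ea] [set ea; eb] [set ec] [set ea; eb]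
  | 4 => case_u [set ea] [set ea; eb] [set ec] [set ea; eb; ec]
  | 5 => case_u [set ea] [set ea; ec] [set eb; ec] [set ea; eb]
  | 6 => case_u [set ea] [set ea; ec] [set eb; ec] [set ea; eb; ec]
  | 7 => case_u [set ea] [set ea; eb; ec] [set eb; ec] [set ea; eb; ec]
  | 8 => case_u [set ea] [set eb] [set ea; eb; ec] [set eb; ec]
  | 9 => case_u [set ea] [set eb] [set ea; eb; ec] [set ec]
  | 10 => case_u [set ea] [set ec] [set ea] [set eb]
  | 11 => case_u [set ea] [set ec] [set ea; eb] [set eb; ec]
  | 12 => case_u [set ea] [set eb; ec] [set ea; eb; ec] [set eb; ec]
  | 13 => case_u [set eb] set0 set0 [set eb]
  | 14 => case_u [set eb] set0 set0 [set eb; ec]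
  | 15 => case_u [set eb] [set ea] [set ec] [set ea; eb]
  | 16 => case_u [set eb] [set ea] [set ec] [set ea; eb; ec]
  | 17 => case_u [set eb] [set ec] [set ea] [set eb]
  | 18 => case_u [set eb] [set ec] [set ea; ec] [set ea; eb; ec]
  | 19 => case_u [set eb] [set ea; ec] [set ea; ec] [set ea; eb]
  | 20 => case_u [set eb] [set ea; ec] [set ea; ec] [set ea; eb; ec]
  | 21 => case_v [set ea; eb] [set eb]
  | 22 => case_v [set ea; eb] [set eb; ec]
  | 23 => case_v [set ea; ec] [set eb]
  | 24 => case_v [set ea; ec] set0
  | _ => case_w
  end.

(* Main.v *)
Require Import Defs.
From mathcomp Require Import all_boot.
From Stdlib Require Import ClassicalEpsilon FunctionalExtensionality.
Set Implicit Arguments. Unset Strict Implicit. Unset Printing Implicit Defensive.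


Section FO.
Variable T : Type.
Variables (eta eps : T -> bool) (mu : T -> T -> T -> bool).
Definition unitalP := forall x z,
  ((exists e, eta e && mu x e z) <-> x = z) /\ ((exists e, eta e && mu e x z) <-> x = z).
Definition assocP := forall x y z w,
  (exists m, mu y z m && mu x m w) <-> (exists m, mu x y m && mu m z w).
Definition ndP := exists beta : T -> T -> Prop, forall x y,
  ((exists b, beta b y /\ exists m, mu x b m && eps m) <-> x = y) /\
  ((exists b, beta y b /\ exists m, mu b x m && eps m) <-> x = y).
Definition FOf := [/\ unitalP, assocP & ndP].
End FO.

Section Bridge.
Variables (T : finType) (F : frob T).
Let etaF := fun z => z \in f_eta F.
Let epsF := fun z => z \in f_eps F.
Let muF := fun x y z => z \in f_mu F x y.

Lemma unitalE : unital F <-> unitalP etaF muF.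
Proof.
rewrite /unital /unitalP /req /rcomp /rtens /rid /rrunit_inv /rlunit_inv /eta_rel /mu_rel /etaF /muF /=.
split.
- case=> H1 H2 x z; split; split.
  + case=> e /andP[He Hz]; apply/H1; exists (x, e); split=> //; exists (x, tt); by split.
  + move=> Hxz; case/H1: Hxz => [[p1 p2] [[q [-> [/= <- Hp]]] Hz]]; exists p2; by rewrite Hp.
  + case=> e /andP[He Hz]; apply/H2; exists (e, x); split=> //; exists (tt, x); by split.
  + move=> Hxz; case/H2: Hxz => [[p1 p2] [[q [-> [/= Hp <-]]] Hz]]; exists p1; by rewrite Hp.
- move=> H; split=> x z; split.
  + case=> [[p1 p2] [[q [-> [/= <- Hp]]] Hz]]; apply/(proj1 (H x z)); exists p2; by rewrite Hp.
  + move=> Hxz; case/(proj1 (H x z)): Hxz => e /andP[He Hz]; exists (x, e); split=> //; exists (x, tt); by split.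
  + case=> [[p1 p2] [[q [-> [/= Hp <-]]] Hz]]; apply/(proj2 (H x z)); exists p1; by rewrite Hp.
  + move=> Hxz; case/(proj2 (H x z)): Hxz => e /andP[He Hz]; exists (e, x); split=> //; exists (tt, x); by split.
Qed.

Lemma assocE : Defs.associative F <-> assocP muF.
Proof.
rewrite /Defs.associative /assocP /req /rcomp /rtens /rid /rassoc /mu_rel /muF /=.
split.
- move=> H x y z w; split.
  + case=> m /andP[H1 H2].
    case: (proj1 (H ((x, y), z) w)).
      exists (x, m); split=> //; exists (x, (y, z)); by split.
    move=> [q1 q2] [[/= Hq <-] Hw]; exists q1; by rewrite Hq.
  + case=> m /andP[H1 H2].
    case: (proj2 (H ((x, y), z) w)).
      exists (m, z); by split.
    move=> [q1 q2] [[r [-> [/= <- Hq]]] Hw]; exists q2; by rewrite Hq.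
- move=> H [[x y] z] w; split.
  + case=> [[q1 q2] [[r [-> [/= <- Hq]]] Hw]].
    case: (proj1 (H x y z w)); first by exists q2; rewrite Hq.
    move=> m /andP[H1 H2]; exists (m, z); by split.
  + case=> [[q1 q2] [[/= Hq <-] Hw]].
    case: (proj2 (H x y z w)); first by exists q1; rewrite Hq.
    move=> m /andP[H1 H2]; exists (x, m); split=> //; exists (x, (y, z)); by split.
Qed.

Ltac dstr := repeat match goal with
  | H : exists _, _ |- _ => destruct H
  | H : _ /\ _ |- _ => destruct H
  | p : prod _ _ |- _ => destruct p
  | u : unit |- _ => destruct u
  | H : (_, _) = (_, _) |- _ => injection H; clear H; intros
  end; simpl in *; subst; simpl in *.

Ltac fin := eexists; split; [eassumption| eexists; apply/andP; split; eassumption].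

Lemma nondegE : nondegenerate F <-> ndP epsF muF.
Proof.
rewrite /nondegenerate /ndP /req /rcomp /rtens /rid /rassoc /rassoc_inv /rlunit /rrunit
  /rlunit_inv /rrunit_inv /eps_rel /mu_rel /epsF /muF /=.
split.
- case=> beta [H1 H2]; exists (fun b y => beta tt (b, y)) => x y; split; split.
  + case=> b [Hb [m /andP[Hm He]]]; apply/H1.
    exists (tt, y); split=> //; exists (m, y); split=> //.
    exists ((x, b), y); split=> //; exists (x, (b, y)); split=> //; exists (x, tt); by split.
  + move=> Hxy; have := proj2 (H1 x y) Hxy; move=> H; dstr; dstr; fin.
  + case=> b [Hb [m /andP[Hm He]]]; apply/H2.
    exists (y, tt); split=> //; exists (y, m); split=> //.
    exists (y, (b, x)); split=> //; exists ((y, b), x); split=> //; exists (tt, x); by split.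
  + move=> Hxy; have := proj2 (H2 x y) Hxy; move=> H; dstr; dstr; fin.
- case=> beta H; exists (fun _ p => beta p.1 p.2); split=> x y; split.
  + move=> H'; dstr; dstr; apply/(proj1 (H _ _)); fin.
  + move=> Hxy; case: (proj2 (proj1 (H x y)) Hxy) => b [Hb [m /andP[Hm He]]].
    exists (tt, y); split=> //; exists (m, y); split=> //.
    exists ((x, b), y); split=> //; exists (x, (b, y)); split=> //; exists (x, tt); by split.
  + move=> H'; dstr; dstr; apply/(proj2 (H _ _)); fin.
  + move=> Hxy; case: (proj2 (proj2 (H x y)) Hxy) => b [Hb [m /andP[Hm He]]].
    exists (y, tt); split=> //; exists (y, m); split=> //.
    exists (y, (b, x)); split=> //; exists ((y, b), x); split=> //; exists (tt, x); by split.
Qed.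

Lemma frobE : is_frobenius F <-> FOf etaF epsF muF.
Proof.
split; case=> H1 H2 H3; split; by [apply/unitalE|apply/assocE|apply/nondegE].
Qed.
End Bridge.

Lemma I3P (x : 'I_3) : x = ea \/ x = eb \/ x = ec.
Proof.
case: x => [[|[|[|n]]] H]; [left|right;left|right;right|by []]; exact: val_inj.
Qed.

Definition all3 (p : pred 'I_3) :=
  if p ea then (if p eb then p ec else false) else false.
Definition ex3 (p : pred 'I_3) := if p ea then true else if p eb then true else p ec.
Lemma all3E p : all3 p = p ea && p eb && p ec.
Proof. by rewrite /all3; case: (p ea); case: (p eb). Qed.
Lemma ex3E p : ex3 p = p ea || p eb || p ec.
Proof. by rewrite /ex3; case: (p ea); case: (p eb). Qed.
Fixpoint allL {T : Type} (p : T -> bool) (s : seq T) : bool :=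
  if s is x :: s' then (if p x then allL p s' else false) else true.
Fixpoint hasL {T : Type} (p : T -> bool) (s : seq T) : bool :=
  if s is x :: s' then (if p x then true else hasL p s') else false.
Lemma allLE T p (s : seq T) : allL p s = all p s.
Proof. by elim: s => //= x s <-; case: (p x). Qed.
Lemma hasLE T p (s : seq T) : hasL p s = has p s.
Proof. by elim: s => //= x s <-; case: (p x). Qed.
Lemma hasLP (T : eqType) (p : pred T) (s : seq T) : reflect (exists2 x, x \in s & p x) (hasL p s).
Proof. rewrite hasLE; exact: hasP. Qed.

Lemma all3P (P : 'I_3 -> Prop) (p : pred 'I_3) :
  (forall x, reflect (P x) (p x)) -> reflect (forall x, P x) (all3 p).
Proof.
move=> h; rewrite all3E; apply: (iffP idP).
- case/andP=> [/andP[ha hb] hc] x; case: (I3P x) => [->|[->|->]]; exact/h.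
- move=> H; apply/andP; split; [apply/andP; split|]; exact/h.
Qed.

Lemma ex3P (P : 'I_3 -> Prop) (p : pred 'I_3) :
  (forall x, reflect (P x) (p x)) -> reflect (exists x, P x) (ex3 p).
Proof.
move=> h; rewrite ex3E; apply: (iffP idP).
- by case/orP=> [/orP[/h ha|/h hb]|/h hc]; eexists; eassumption.
- case=> x /h; case: (I3P x) => [->|[->|->]]; move=> ->; rewrite ?orbT //.
Qed.

Lemma iffEqP (P Q : Prop) b c : reflect P b -> reflect Q c -> reflect (P <-> Q) (b == c).
Proof.
case=> hP; case=> hQ /=; constructor; try tauto.
Qed.

Definition eq3 (x y : 'I_3) : bool := eqn (nat_of_ord x) (nat_of_ord y).
Lemma eq3E x y : eq3 x y = (x == y). Proof. by []. Qed.
Lemma eq3P x y : reflect (x = y) (eq3 x y). Proof. rewrite eq3E; exact: eqP. Qed.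
Definition beq (a b : bool) : bool := if a then b else ~~ b.
Lemma beqE a b : beq a b = (a == b). Proof. by case: a; case: b. Qed.
Lemma beqP (P Q : Prop) b c : reflect P b -> reflect Q c -> reflect (P <-> Q) (beq b c).
Proof. rewrite beqE; exact: iffEqP. Qed.

Definition s3 := (bool * bool * bool)%type.
Definition sel3 {A : Type} (a b c : A) (x : 'I_3) : A :=
  match nat_of_ord x with 0 => a | 1 => b | _ => c end.
Definition memc (s : s3) (x : 'I_3) : bool := sel3 s.1.1 s.1.2 s.2 x.
Definition code (p : pred 'I_3) : s3 := (p ea, p eb, p ec).
Lemma memc_code p x : memc (code p) x = p x.
Proof. by case: (I3P x) => [->|[->|->]]. Qed.
Lemma code_memc p : memc (code p) = p.
Proof. apply: functional_extensionality => x; exact: memc_code. Qed.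
Definition subs3 : seq s3 :=
  [:: (false,false,false); (true,false,false); (false,true,false); (true,true,false);
      (false,false,true); (true,false,true); (false,true,true); (true,true,true)].
Lemma in_subs3 (s : s3) : s \in subs3.
Proof. by case: s => [[[] []] []]. Qed.

Definition unital_b (eta : pred 'I_3) (mu : 'I_3 -> 'I_3 -> pred 'I_3) :=
  all3 (fun x => all3 (fun z =>
    if beq (ex3 (fun e => eta e && mu x e z)) (eq3 x z) then
    beq (ex3 (fun e => eta e && mu e x z)) (eq3 x z) else false)).
Definition assoc_b (mu : 'I_3 -> 'I_3 -> pred 'I_3) :=
  all3 (fun x => all3 (fun y => all3 (fun z => all3 (fun w =>
    beq (ex3 (fun m => mu y z m && mu x m w)) (ex3 (fun m => mu x y m && mu m z w)))))).
Definition nd_check (eps : pred 'I_3) (mu : 'I_3 -> 'I_3 -> pred 'I_3)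
  (beta : 'I_3 -> 'I_3 -> bool) :=
  all3 (fun x => all3 (fun y =>
    if beq (ex3 (fun b => beta b y && ex3 (fun m => mu x b m && eps m))) (eq3 x y) then
    beq (ex3 (fun b => beta y b && ex3 (fun m => mu b x m && eps m))) (eq3 x y) else false)).
Definition betaf (r0 r1 r2 : s3) (x y : 'I_3) := memc (sel3 r0 r1 r2 x) y.
Definition nd_b eps mu :=
  hasL (fun r0 => hasL (fun r1 => hasL (fun r2 => nd_check eps mu (betaf r0 r1 r2))
    subs3) subs3) subs3.
Definition frob_b eta eps mu := if unital_b eta mu then (if assoc_b mu then nd_b eps mu else false) else false.

Section Refl.
Variables (eta eps : pred 'I_3) (mu : 'I_3 -> 'I_3 -> pred 'I_3).

Lemma unital_bP : reflect (unitalP eta mu) (unital_b eta mu).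
Proof.
apply: all3P => x; apply: all3P => z.
apply: andPP; (apply: beqP; [apply: ex3P => e; exact: idP | exact: eq3P]).
Qed.

Lemma assoc_bP : reflect (assocP mu) (assoc_b mu).
Proof.
apply: all3P => x; apply: all3P => y; apply: all3P => z; apply: all3P => w.
apply: beqP; apply: ex3P => m; exact: idP.
Qed.

Lemma nd_checkP (beta : 'I_3 -> 'I_3 -> bool) : reflect (forall x y,
  ((exists b, beta b y /\ exists m, mu x b m && eps m) <-> x = y) /\
  ((exists b, beta y b /\ exists m, mu b x m && eps m) <-> x = y)) (nd_check eps mu beta).
Proof.
apply: all3P => x; apply: all3P => y.
apply: andPP; (apply: beqP; [apply: ex3P => b; apply: andPP; [exact: idP| apply: ex3P => m; exact: idP] | exact: eq3P]).
Qed.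

Lemma betaf_code (bb : 'I_3 -> 'I_3 -> bool) x y :
  betaf (code (bb ea)) (code (bb eb)) (code (bb ec)) x y = bb x y.
Proof. by rewrite /betaf; case: (I3P x) => [->|[->|->]]; rewrite /= memc_code. Qed.

Lemma nd_bP : reflect (ndP eps mu) (nd_b eps mu).
Proof.
apply: (iffP idP).
- case/hasLP=> r0 _ /hasLP[r1 _ /hasLP[r2 _ /nd_checkP H]].
  by exists (fun b y => betaf r0 r1 r2 b y).
- case=> beta H.
  pose bb b y := if excluded_middle_informative (beta b y) then true else false.
  have Hbb b y : bb b y <-> beta b y.
    by rewrite /bb; case: excluded_middle_informative.
  have Hb2 b y : betaf (code (bb ea)) (code (bb eb)) (code (bb ec)) b y <-> beta b y.
    by rewrite betaf_code; exact: Hbb.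
  apply/hasLP; exists (code (bb ea)); first exact: in_subs3.
  apply/hasLP; exists (code (bb eb)); first exact: in_subs3.
  apply/hasLP; exists (code (bb ec)); first exact: in_subs3.
  apply/nd_checkP => x y.
  case: (H x y) => [[A1 A2] [B1 B2]]; split; split.
  + case=> b [/Hb2 Hb Hm]; apply: A1; by exists b.
  + move/A2=> [b [Hb Hm]]; exists b; split=> //; exact/Hb2.
  + case=> b [/Hb2 Hb Hm]; apply: B1; by exists b.
  + move/B2=> [b [Hb Hm]]; exists b; split=> //; exact/Hb2.
Qed.

Lemma frob_bP : reflect (FOf eta eps mu) (frob_b eta eps mu).
Proof.
have -> : frob_b eta eps mu = [&& unital_b eta mu, assoc_b mu & nd_b eps mu].
  by rewrite /frob_b; case: (unital_b _ _); case: (assoc_b _).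
apply: (iffP and3P).
- case=> /unital_bP H1 /assoc_bP H2 /nd_bP H3; by split.
- case=> H1 H2 H3; split; by [apply/unital_bP|apply/assoc_bP|apply/nd_bP].
Qed.
End Refl.

Notation t := true. Notation f := false.
Definition mu_uf (bb bc cc : s3) (x y z : 'I_3) : bool :=
  if eq3 x ea then eq3 z y else if eq3 y ea then eq3 z x
  else if eq3 x eb && eq3 y eb then memc bb z
  else if eq3 x ec && eq3 y ec then memc cc z
  else memc bc z.
Definition mu_vf (cc : s3) (x y z : 'I_3) : bool :=
  if eq3 x ea && eq3 y ea then eq3 z ea
  else if eq3 x ea || eq3 y ea then false
  else if eq3 x eb && eq3 y eb then eq3 z eb
  else if eq3 x ec && eq3 y ec then memc cc z
  else eq3 z ec.
Definition mu_wf (x y z : 'I_3) : bool := eq3 x y && eq3 z x.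

Definition fcode_t := (pred 'I_3 * pred 'I_3 * ('I_3 -> 'I_3 -> pred 'I_3))%type.
Definition cu (e bb bc cc : s3) : fcode_t := (fun z => eq3 z ea, memc e, mu_uf bb bc cc).
Definition cv (e cc : s3) : fcode_t := (fun z => eq3 z ea || eq3 z eb, memc e, mu_vf cc).
Definition cw : fcode_t := (fun z => true, fun z => true, mu_wf).
Definition sA : s3 := (t,f,f). Definition sB : s3 := (f,t,f). Definition sC : s3 := (f,f,t).
Definition sAB : s3 := (t,t,f). Definition sAC : s3 := (t,f,t). Definition sBC : s3 := (f,t,t).
Definition sABC : s3 := (t,t,t). Definition s0 : s3 := (f,f,f).

Definition fcode (n : nat) : fcode_t :=
  match n with
  | 1 => cu sA sA sC sAB
  | 2 => cu sA sA sC sABC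
  | 3 => cu sA sAB sC sAB
  | 4 => cu sA sAB sC sABC
  | 5 => cu sA sAC sBC sAB
  | 6 => cu sA sAC sBC sABC
  | 7 => cu sA sABC sBC sABC
  | 8 => cu sA sB sABC sBC
  | 9 => cu sA sB sABC sC
  | 10 => cu sA sC sA sB
  | 11 => cu sA sC sAB sBC
  | 12 => cu sA sBC sABC sBC
  | 13 => cu sB s0 s0 sB
  | 14 => cu sB s0 s0 sBC
  | 15 => cu sB sA sC sAB
  | 16 => cu sB sA sC sABC
  | 17 => cu sB sC sA sB
  | 18 => cu sB sC sAC sABC
  | 19 => cu sB sAC sAC sAB
  | 20 => cu sB sAC sAC sABC
  | 21 => cv sAB sB
  | 22 => cv sAB sBC
  | 23 => cv sAC sB
  | 24 => cv sAC s0
  | _ => cw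
  end.

Definition codeS (A : {set 'I_3}) := code (fun z => z \in A).
Lemma memc_codeS A z : memc (codeS A) z = (z \in A).
Proof. exact: memc_code. Qed.

Definition code_ok (F : frob 'I_3) (c : fcode_t) :=
  [/\ forall z, (z \in f_eta F) = c.1.1 z, forall z, (z \in f_eps F) = c.1.2 z &
      forall x y z, (z \in f_mu F x y) = c.2 x y z].

Lemma cu_ok e bb bc cc e' bb' bc' cc' :
  codeS e = e' -> codeS bb = bb' -> codeS bc = bc' -> codeS cc = cc' ->
  code_ok (case_u e bb bc cc) (cu e' bb' bc' cc').
Proof.
move=> <- <- <- <-; split=> [z|z|x y z] /=; rewrite ?eq3E ?inE ?memc_codeS //.
rewrite /mu_u /mu_uf !eq3E; by repeat case: ifP; rewrite ?inE ?memc_codeS.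
Qed.

Lemma cv_ok e cc e' cc' : codeS e = e' -> codeS cc = cc' ->
  code_ok (case_v e cc) (cv e' cc').
Proof.
move=> <- <-; split=> [z|z|x y z] /=; rewrite ?eq3E ?inE ?memc_codeS //.
rewrite /mu_v /mu_vf !eq3E; by repeat case: ifP; rewrite ?inE ?memc_codeS.
Qed.

Lemma cw_ok : code_ok case_w cw.
Proof.
split=> [z|z|x y z] /=; rewrite ?inE //.
rewrite /mu_wf !eq3E; case: ifP => _; by rewrite ?inE ?andbF ?andbT.
Qed.

Lemma fcode_ok (k : 'I_25) : code_ok (fcase k.+1) (fcode k.+1).
Proof.
case: k => k Hk.
do 24 (case: k Hk => [|k] Hk; [ first [ apply: cu_ok | apply: cv_ok ];
   by rewrite /codeS /code !inE | ]).
exact: cw_ok.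
Qed.

Definition iso_b (g : 'I_3 -> 'I_3) (c : fcode_t) (eta eps : pred 'I_3)
  (mu : 'I_3 -> 'I_3 -> pred 'I_3) :=
  if all3 (fun z => beq (eta (g z)) (c.1.1 z)) then
  if all3 (fun z => beq (eps (g z)) (c.1.2 z)) then
      all3 (fun x => all3 (fun y => all3 (fun z => beq (mu (g x) (g y) (g z)) (c.2 x y z))))
  else false else false.
Definition perms : seq ('I_3 * 'I_3 * 'I_3) :=
  [:: (ea,eb,ec); (ea,ec,eb); (eb,ea,ec); (eb,ec,ea); (ec,ea,eb); (ec,eb,ea)].
Definition pf (c : 'I_3 * 'I_3 * 'I_3) (x : 'I_3) : 'I_3 := sel3 c.1.1 c.1.2 c.2 x.
Definition has_iso eta eps mu :=
  hasL (fun k => hasL (fun c => iso_b (pf c) (fcode k.+1) eta eps mu) perms) (iota 0 25).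

Definition loc (eta : s3) (x y : 'I_3) (m : s3) :=
  all3 (fun z => memc m z ==> ((memc eta y ==> eq3 x z) && (memc eta x ==> eq3 y z))).
Definition mu9 (m00 m01 m02 m10 m11 m12 m20 m21 m22 : s3) (x y z : 'I_3) :=
  memc (sel3 (sel3 m00 m01 m02 y) (sel3 m10 m11 m12 y) (sel3 m20 m21 m22 y) x) z.

Definition allS (p : s3 -> bool) : bool := allL p subs3.
Definition leafS (eta : s3) (mu : 'I_3 -> 'I_3 -> pred 'I_3) : bool :=
  if unital_b (memc eta) mu then if assoc_b mu then
    allS (fun eps => if nd_b (memc eps) mu then has_iso (memc eta) (memc eps) mu else true)
  else true else true.
Definition lvl9 (eta : s3) (m00 : s3) (m01 : s3) (m02 : s3) (m10 : s3) (m11 : s3) (m12 : s3) (m20 : s3) (m21 : s3) (m22 : s3) : bool :=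
  leafS eta (mu9 m00 m01 m02 m10 m11 m12 m20 m21 m22).
Definition lvl8 (eta : s3) (m00 : s3) (m01 : s3) (m02 : s3) (m10 : s3) (m11 : s3) (m12 : s3) (m20 : s3) (m21 : s3) : bool :=
  allS (fun m22 => if loc eta ec ec m22 then lvl9 eta m00 m01 m02 m10 m11 m12 m20 m21 m22 else true).
Definition lvl7 (eta : s3) (m00 : s3) (m01 : s3) (m02 : s3) (m10 : s3) (m11 : s3) (m12 : s3) (m20 : s3) : bool :=
  allS (fun m21 => if loc eta ec eb m21 then lvl8 eta m00 m01 m02 m10 m11 m12 m20 m21 else true).
Definition lvl6 (eta : s3) (m00 : s3) (m01 : s3) (m02 : s3) (m10 : s3) (m11 : s3) (m12 : s3) : bool :=
  allS (fun m20 => if loc eta ec ea m20 then lvl7 eta m00 m01 m02 m10 m11 m12 m20 else true).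
Definition lvl5 (eta : s3) (m00 : s3) (m01 : s3) (m02 : s3) (m10 : s3) (m11 : s3) : bool :=
  allS (fun m12 => if loc eta eb ec m12 then lvl6 eta m00 m01 m02 m10 m11 m12 else true).
Definition lvl4 (eta : s3) (m00 : s3) (m01 : s3) (m02 : s3) (m10 : s3) : bool :=
  allS (fun m11 => if loc eta eb eb m11 then lvl5 eta m00 m01 m02 m10 m11 else true).
Definition lvl3 (eta : s3) (m00 : s3) (m01 : s3) (m02 : s3) : bool :=
  allS (fun m10 => if loc eta eb ea m10 then lvl4 eta m00 m01 m02 m10 else true).
Definition lvl2 (eta : s3) (m00 : s3) (m01 : s3) : bool :=
  allS (fun m02 => if loc eta ea ec m02 then lvl3 eta m00 m01 m02 else true).
Definition lvl1 (eta : s3) (m00 : s3) : bool :=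
  allS (fun m01 => if loc eta ea eb m01 then lvl2 eta m00 m01 else true).
Definition lvl0 (eta : s3)  : bool :=
  allS (fun m00 => if loc eta ea ea m00 then lvl1 eta m00 else true).
Definition search : bool := allS (fun eta => if ex3 (memc eta) then lvl0 eta else true).

Lemma all3_elim p : all3 p -> forall x, p x.
Proof. rewrite all3E => /andP[/andP[ha hb] hc] x; by case: (I3P x) => [->|[->|->]]. Qed.
Lemma all3_intro (p : pred 'I_3) : (forall x, p x) -> all3 p.
Proof. by move=> H; rewrite all3E !H. Qed.

Lemma allS_in (s : s3) (p : s3 -> bool) : allS p -> p s.
Proof. rewrite /allS allLE => /allP; apply; exact: in_subs3. Qed.
Arguments allS_in s {p}.

Lemma mu9_code (mu : 'I_3 -> 'I_3 -> pred 'I_3) :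
  mu9 (code (mu ea ea)) (code (mu ea eb)) (code (mu ea ec))
      (code (mu eb ea)) (code (mu eb eb)) (code (mu eb ec))
      (code (mu ec ea)) (code (mu ec eb)) (code (mu ec ec)) = mu.
Proof.
apply: functional_extensionality => x; apply: functional_extensionality => y.
apply: functional_extensionality => z; rewrite /mu9.
by case: (I3P x) => [->|[->|->]]; case: (I3P y) => [->|[->|->]]; rewrite /= memc_code.
Qed.

Lemma loc_ok (eta : pred 'I_3) mu x y : unitalP eta mu -> loc (code eta) x y (code (mu x y)).
Proof.
move=> H; apply: all3_intro => z; rewrite !memc_code.
apply/implyP => Hm; apply/andP; split; apply/implyP => He; apply/eq3P.
- apply: (proj1 (proj1 (H x z))); exists y; by rewrite He Hm.
- apply: (proj1 (proj2 (H y z))); exists x; by rewrite He Hm.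
Qed.

Lemma searchT : allS (fun eta => if ex3 (memc eta) then lvl0 eta else true).
Proof. vm_cast_no_check (erefl true). Qed.

Lemma stepS (b P : bool) : (if b then P else true) -> b -> P.
Proof. by case: b. Qed.

Lemma search_step eta : ex3 (memc eta) -> lvl0 eta.
Proof. move=> H; exact: stepS (allS_in eta searchT) H. Qed.
Lemma lvl0_step eta m00 : lvl0 eta  -> loc eta ea ea m00 -> lvl1 eta m00.
Proof. rewrite /lvl0 => H; exact: stepS (allS_in m00 H). Qed.
Lemma lvl1_step eta m00 m01 : lvl1 eta m00 -> loc eta ea eb m01 -> lvl2 eta m00 m01.
Proof. rewrite /lvl1 => H; exact: stepS (allS_in m01 H). Qed.
Lemma lvl2_step eta m00 m01 m02 : lvl2 eta m00 m01 -> loc eta ea ec m02 -> lvl3 eta m00 m01 m02.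
Proof. rewrite /lvl2 => H; exact: stepS (allS_in m02 H). Qed.
Lemma lvl3_step eta m00 m01 m02 m10 : lvl3 eta m00 m01 m02 -> loc eta eb ea m10 -> lvl4 eta m00 m01 m02 m10.
Proof. rewrite /lvl3 => H; exact: stepS (allS_in m10 H). Qed.
Lemma lvl4_step eta m00 m01 m02 m10 m11 : lvl4 eta m00 m01 m02 m10 -> loc eta eb eb m11 -> lvl5 eta m00 m01 m02 m10 m11.
Proof. rewrite /lvl4 => H; exact: stepS (allS_in m11 H). Qed.
Lemma lvl5_step eta m00 m01 m02 m10 m11 m12 : lvl5 eta m00 m01 m02 m10 m11 -> loc eta eb ec m12 -> lvl6 eta m00 m01 m02 m10 m11 m12.
Proof. rewrite /lvl5 => H; exact: stepS (allS_in m12 H). Qed.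
Lemma lvl6_step eta m00 m01 m02 m10 m11 m12 m20 : lvl6 eta m00 m01 m02 m10 m11 m12 -> loc eta ec ea m20 -> lvl7 eta m00 m01 m02 m10 m11 m12 m20.
Proof. rewrite /lvl6 => H; exact: stepS (allS_in m20 H). Qed.
Lemma lvl7_step eta m00 m01 m02 m10 m11 m12 m20 m21 : lvl7 eta m00 m01 m02 m10 m11 m12 m20 -> loc eta ec eb m21 -> lvl8 eta m00 m01 m02 m10 m11 m12 m20 m21.
Proof. rewrite /lvl7 => H; exact: stepS (allS_in m21 H). Qed.
Lemma lvl8_step eta m00 m01 m02 m10 m11 m12 m20 m21 m22 : lvl8 eta m00 m01 m02 m10 m11 m12 m20 m21 -> loc eta ec ec m22 -> lvl9 eta m00 m01 m02 m10 m11 m12 m20 m21 m22.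
Proof. rewrite /lvl8 => H; exact: stepS (allS_in m22 H). Qed.
Lemma leaf_step eta eps mu : leafS eta mu -> unital_b (memc eta) mu -> assoc_b mu ->
  nd_b (memc eps) mu -> has_iso (memc eta) (memc eps) mu.
Proof.
rewrite /leafS => H H1 H2 H3; rewrite H1 H2 in H; exact: stepS (allS_in eps H) H3.
Qed.

Lemma classify3 (eta eps : pred 'I_3) (mu : 'I_3 -> 'I_3 -> pred 'I_3) :
  FOf eta eps mu -> has_iso eta eps mu.
Proof.
case=> Hu Ha Hn.
have Hub : unital_b eta mu by apply/unital_bP.
have Hab : assoc_b mu by apply/assoc_bP.
have Hnb : nd_b eps mu by apply/nd_bP.
have Hex : ex3 (memc (code eta)).
  rewrite code_memc; apply/(ex3P (fun x => idP)).
  case: (proj2 (proj1 (Hu ea ea)) erefl) => e /andP[He _]; by exists e.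
have S := search_step Hex.
have {}S := lvl0_step S (loc_ok ea ea Hu).
have {}S := lvl1_step S (loc_ok ea eb Hu).
have {}S := lvl2_step S (loc_ok ea ec Hu).
have {}S := lvl3_step S (loc_ok eb ea Hu).
have {}S := lvl4_step S (loc_ok eb eb Hu).
have {}S := lvl5_step S (loc_ok eb ec Hu).
have {}S := lvl6_step S (loc_ok ec ea Hu).
have {}S := lvl7_step S (loc_ok ec eb Hu).
have {}S := lvl8_step S (loc_ok ec ec Hu).
rewrite /lvl9 mu9_code in S.
rewrite -(code_memc eta) -(code_memc eps).
apply: leaf_step S _ Hab _; by rewrite code_memc.
Qed.

Section Iso.
Variables (T T' : finType) (F : frob T) (F' : frob T').

Lemma imset_eq (f : T -> T') (A : {set T}) (B : {set T'}) :
  bijective f -> (forall z, (f z \in B) = (z \in A)) -> f @: A = B.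
Proof.
case=> g gK fK H; apply/setP => w.
rewrite -(fK w) mem_imset ?H //; exact: can_inj gK.
Qed.

Lemma frob_isoP : frob_iso F F' <-> exists f, [/\ bijective f,
  forall z, (f z \in f_eta F') = (z \in f_eta F),
  forall z, (f z \in f_eps F') = (z \in f_eps F) &
  forall x y z, (f z \in f_mu F' (f x) (f y)) = (z \in f_mu F x y)].
Proof.
split.
- case=> f [Hb He Hp Hm]; have Hi : injective f by exact: bij_inj.
  exists f; split=> //.
  + by move=> z; rewrite -He mem_imset.
  + by move=> z; rewrite -Hp mem_imset.
  + by move=> x y z; rewrite Hm mem_imset.
- case=> f [Hb He Hp Hm]; exists f; split=> //; try exact: imset_eq.
  move=> x y; apply/esym/imset_eq => // z; exact: Hm.
Qed.
End Iso.

Lemma iso_comp (T1 T2 T3 : finType) (F1 : frob T1) (F2 : frob T2) (F3 : frob T3) :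
  frob_iso F1 F2 -> frob_iso F2 F3 -> frob_iso F1 F3.
Proof.
case=> f [Hf He Hp Hm] [g [Hg He' Hp' Hm']]; exists (g \o f); split.
- exact: bij_comp.
- by rewrite imset_comp He.
- by rewrite imset_comp Hp.
- by move=> x y; rewrite imset_comp /= Hm' Hm.
Qed.

Lemma all3_beqP (a b : pred 'I_3) : reflect (forall z, a z = b z) (all3 (fun z => beq (a z) (b z))).
Proof. apply: all3P => z; rewrite beqE; exact: eqP. Qed.

Lemma iso_bP g (c : fcode_t) eta eps mu : reflect
  [/\ forall z, eta (g z) = c.1.1 z, forall z, eps (g z) = c.1.2 z &
      forall x y z, mu (g x) (g y) (g z) = c.2 x y z] (iso_b g c eta eps mu).
Proof.
have -> : iso_b g c eta eps mu = [&& all3 (fun z => beq (eta (g z)) (c.1.1 z)),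
    all3 (fun z => beq (eps (g z)) (c.1.2 z)) &
    all3 (fun x => all3 (fun y => all3 (fun z => beq (mu (g x) (g y) (g z)) (c.2 x y z))))].
  by rewrite /iso_b; case: (all3 _); case: (all3 _).
apply: (iffP and3P) => [[/all3_beqP H1 /all3_beqP H2 H3]|[H1 H2 H3]]; split.
- by [].
- by [].
- by move: H3 => /(all3P (fun x => all3P (fun y => all3_beqP _ _))).
- exact/all3_beqP.
- exact/all3_beqP.
- exact/(all3P (fun x => all3P (fun y => all3_beqP _ _))).
Qed.

Lemma perm_inj c : c \in perms -> injective (pf c).
Proof.
have H : all (fun c => all3 (fun x => all3 (fun y => implb (eq3 (pf c x) (pf c y)) (eq3 x y)))) perms.
  by vm_compute.
move=> Hc x y Hxy; move/allP/(_ c Hc): H => H.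
have := all3_elim (all3_elim H x) y; rewrite Hxy => /implyP; move/(_ (introT (eq3P _ _) erefl)).
by move/eq3P.
Qed.

Lemma perm_bij c : c \in perms -> bijective (pf c).
Proof. move=> Hc; apply: injF_bij; exact: perm_inj. Qed.

Lemma bij_perm (g : 'I_3 -> 'I_3) : bijective g -> exists2 c, c \in perms & forall x, g x = pf c x.
Proof.
move=> /bij_inj Hi; exists (g ea, g eb, g ec).
- have H : all3 (fun a => all3 (fun b => all3 (fun d =>
      implb [&& a != b, a != d & b != d] ((a, b, d) \in perms)))).
    by vm_compute.
  have := all3_elim (all3_elim (all3_elim H (g ea)) (g eb)) (g ec).
  move/implyP; apply; rewrite !(inj_eq Hi) //.
- by move=> x; case: (I3P x) => [->|[->|->]].
Qed.

Lemma allL_iota (p : nat -> bool) k : allL p (iota 0 25) -> k < 25 -> p k.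
Proof. rewrite allLE => /allP H Hk; apply: H; by rewrite mem_iota. Qed.

Lemma code_ok_fun F c : code_ok F c ->
  [/\ (fun z => z \in f_eta F) = c.1.1, (fun z => z \in f_eps F) = c.1.2 &
      (fun x y z => z \in f_mu F x y) = c.2].
Proof.
case=> H1 H2 H3; split; apply: functional_extensionality => x //.
do 2 apply: functional_extensionality => ? //.
Qed.

Lemma part1_b : allL (fun k => frob_b (fcode k.+1).1.1 (fcode k.+1).1.2 (fcode k.+1).2) (iota 0 25).
Proof. vm_cast_no_check (erefl true). Qed.

Lemma part2_b : allL (fun k => allL (fun l => implb (hasL (fun c => iso_b (pf c) (fcode k.+1)
   (fcode l.+1).1.1 (fcode l.+1).1.2 (fcode l.+1).2) perms) (eqn k l)) (iota 0 25)) (iota 0 25).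
Proof. vm_cast_no_check (erefl true). Qed.

Lemma FO_pull (T T' : Type) (h : T -> T') (eta eps : T' -> bool) mu : bijective h ->
  FOf eta eps mu -> FOf (fun z => eta (h z)) (fun z => eps (h z)) (fun x y z => mu (h x) (h y) (h z)).
Proof.
case=> g gK hK [Hu Ha Hn]; have Hi := can_inj gK; split.
- move=> x z; split; split.
  + case=> e He; apply: Hi; apply/(proj1 (proj1 (Hu (h x) (h z)))); by exists (h e).
  + move=> <-; case: (proj2 (proj1 (Hu (h x) (h x))) erefl) => e He; exists (g e); by rewrite hK.
  + case=> e He; apply: Hi; apply/(proj1 (proj2 (Hu (h x) (h z)))); by exists (h e).
  + move=> <-; case: (proj2 (proj2 (Hu (h x) (h x))) erefl) => e He; exists (g e); by rewrite hK.
- move=> x y z w; split.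
  + case=> m Hm; case: (proj1 (Ha (h x) (h y) (h z) (h w))); first by exists (h m).
    move=> m' Hm'; exists (g m'); by rewrite hK.
  + case=> m Hm; case: (proj2 (Ha (h x) (h y) (h z) (h w))); first by exists (h m).
    move=> m' Hm'; exists (g m'); by rewrite hK.
- case: Hn => beta Hb; exists (fun b y => beta (h b) (h y)) => x y; split; split.
  + case=> b [Hb1 [m Hm]]; apply: Hi; apply/(proj1 (proj1 (Hb (h x) (h y)))).
    exists (h b); split=> //; by exists (h m).
  + move=> <-; case: (proj2 (proj1 (Hb (h x) (h x))) erefl) => b [Hb1 [m Hm]].
    exists (g b); rewrite hK; split=> //; exists (g m); by rewrite hK.
  + case=> b [Hb1 [m Hm]]; apply: Hi; apply/(proj1 (proj2 (Hb (h x) (h y)))).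
    exists (h b); split=> //; by exists (h m).
  + move=> <-; case: (proj2 (proj2 (Hb (h x) (h x))) erefl) => b [Hb1 [m Hm]].
    exists (g b); rewrite hK; split=> //; exists (g m); by rewrite hK.
Qed.

Lemma iso_from_b (F : frob 'I_3) k c : k < 25 -> c \in perms ->
  iso_b (pf c) (fcode k.+1) (fun z => z \in f_eta F) (fun z => z \in f_eps F)
    (fun x y z => z \in f_mu F x y) -> frob_iso (fcase k.+1) F.
Proof.
move=> Hk Hc /iso_bP [H1 H2 H3].
case: (fcode_ok (Ordinal Hk)) => /= G1 G2 G3.
apply/frob_isoP; exists (pf c); split.
- exact: perm_bij.
- by move=> z; rewrite H1 G1.
- by move=> z; rewrite H2 G2.
- by move=> x y z; rewrite H3 G3.
Qed.

Theorem theorem6p1 :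
  (* each of the 25 listed structures is a Frobenius object in Rel *)
  (forall k : 'I_25, is_frobenius (fcase k.+1)) /\
  (* they are pairwise non-isomorphic *)
  (forall k l : 'I_25, frob_iso (fcase k.+1) (fcase l.+1) -> k = l) /\
  (* every Frobenius object on a three-element set is isomorphic to one of them *)
  (forall (T : finType) (F : frob T), #|T| = 3 -> is_frobenius F ->
     exists k : 'I_25, frob_iso (fcase k.+1) F).
Proof.
split; [|split].
- move=> [k Hk]; apply/frobE.
  case: (code_ok_fun (fcode_ok (Ordinal Hk))) => /= -> -> ->.
  apply/frob_bP; exact: (allL_iota part1_b Hk).
- move=> [k Hk] [l Hl] /frob_isoP [g [Hg He Hp Hm]].
  case: (bij_perm Hg) => c Hc Hgc.
  case: (fcode_ok (Ordinal Hk)) => /= K1 K2 K3.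
  case: (fcode_ok (Ordinal Hl)) => /= L1 L2 L3.
  have Hiso : iso_b (pf c) (fcode k.+1) (fcode l.+1).1.1 (fcode l.+1).1.2 (fcode l.+1).2.
    apply/iso_bP; split.
    + by move=> z; rewrite -L1 -K1 -Hgc; exact: He z.
    + by move=> z; rewrite -L2 -K2 -Hgc; exact: Hp z.
    + by move=> x y z; rewrite -L3 -K3 -!Hgc; exact: Hm x y z.
  have := allL_iota (allL_iota part2_b Hk) Hl.
  move/implyP; rewrite hasLE; move/(_ (introT hasP (ex_intro2 _ _ c Hc Hiso))).
  move/eqnP => Ekl; exact: val_inj.
- move=> T F H3 HF.
  pose h (x : 'I_3) : T := enum_val (cast_ord (esym H3) x).
  have Hh : bijective h.
    exists (fun t => cast_ord H3 (enum_rank t)) => x; rewrite /h.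
    + by rewrite enum_valK cast_ordKV.
    + by rewrite cast_ordK enum_rankK.
  pose F' := Frob (h @^-1: f_eta F) (h @^-1: f_eps F) (fun x y => h @^-1: f_mu F (h x) (h y)).
  have HF' : FOf (fun z => z \in f_eta F') (fun z => z \in f_eps F') (fun x y z => z \in f_mu F' x y).
    have E1 : (fun z => z \in f_eta F') = (fun z => h z \in f_eta F).
      by apply: functional_extensionality => z; rewrite inE.
    have E2 : (fun z => z \in f_eps F') = (fun z => h z \in f_eps F).
      by apply: functional_extensionality => z; rewrite inE.
    have E3 : (fun x y z => z \in f_mu F' x y) = (fun x y z => h z \in f_mu F (h x) (h y)).
      by do 3 apply: functional_extensionality => ?; rewrite inE.
    rewrite E1 E2 E3; apply: (@FO_pull _ _ h (fun z => z \in f_eta F) (fun z => z \in f_eps F)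
      (fun x y z => z \in f_mu F x y) Hh); exact/frobE.
  have /hasLP [k Hk /hasLP [c Hc Hiso]] := classify3 HF'.
  have Hk' : k < 25 by rewrite mem_iota in Hk.
  exists (Ordinal Hk'); apply: iso_comp (iso_from_b Hk' Hc Hiso) _.
  apply/frob_isoP; exists h; split=> //.
  + by move=> z; rewrite inE.
  + by move=> z; rewrite inE.
  + by move=> x y z; rewrite /= inE.
Qed.
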